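(* Let $A$ be an integral domain containing $\mathbb{Q}$ and let $D$ be a locally nilpotent derivation of $A$. Let $a,b,\lambda\in A$ and $\mu\in\ker D$, all nonzero, and suppose $\lambda\, a\, D(b)=\mu\, b\, D(a)$. Then either $D(a)=D(b)=0$, or $\lambda\mu^{-1}$ (an element of the fraction field of $A$) is a positive rational number.
   Context: A derivation $D$ of $A$ is an additive map satisfying $D(ab)=aD(b)+D(a)b$; it is locally nilpotent if for every $a\in A$ there is $n$ with $D^n(a)=0$. $\ker D=\{a\in A: D(a)=0\}$. *)

(* Defs.v *)
From HB Require Import structures.
From mathcomp Require Import all_boot all_order all_algebra.
Set Implicit Arguments. Unset Strict Implicit. Unset Printing Implicit Defensive.
Import Order.TTheory GRing.Theory Num.Theory.
Local Open Scope ring_scope.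

Definition is_derivation (A : idomainType) (D : A -> A) : Prop :=
  (forall a b : A, D (a + b) = D a + D b) /\
  (forall a b : A, D (a * b) = a * D b + D a * b).

Definition locally_nilpotent (A : idomainType) (D : A -> A) : Prop :=
  forall a : A, exists n : nat, iter n D a = 0.

(* "A contains Q": every positive integer is invertible in A
   (equivalently, the canonical map Z -> A extends to Q -> A). *)
Definition contains_rat (A : idomainType) : Prop :=
  forall n : nat, (n.+1)%:R \is a @GRing.unit A.

Definition frac_emb (A : idomainType) (x : A) : {fraction A} :=
  @FracField.tofrac A x.

(* Main.v *)
Require Import Defs.
From HB Require Import structures.
From mathcomp Require Import all_boot all_order all_algebra.
Import Order.TTheory GRing.Theory Num.Theory.
Local Open Scope ring_scope.

Section Aux.
Variables (A : idomainType) (D : A -> A).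
Hypothesis hD : is_derivation D.

Lemma D0 : D 0 = 0.
Proof.
apply: (addrI (D 0)); by rewrite -(proj1 hD) !addr0.
Qed.

Lemma iter0 n : iter n D 0 = 0.
Proof. by elim: n => //= n ->; exact: D0. Qed.

Lemma iterDadd n x y : iter n D (x + y) = iter n D x + iter n D y.
Proof. by elim: n => //= n ->; rewrite (proj1 hD). Qed.

Lemma DMn x c : D (x *+ c) = D x *+ c.
Proof. by elim: c => [|c IH]; rewrite ?D0 // !mulrS (proj1 hD) IH. Qed.

Lemma iter_kill k j x : iter k D x = 0 -> iter (j + k) D x = 0.
Proof. by move=> h; rewrite iterD h iter0. Qed.

Lemma lead n : forall x y p q, (p + q = n)%N ->
  iter p.+1 D x = 0 -> iter q.+1 D y = 0 ->
  exists c, (0 < c)%N /\ iter n D (x * y) = (iter p D x * iter q D y) *+ c.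
Proof.
elim: n => [|n IH] x y p q.
  move=> /eqP; rewrite addn_eq0 => /andP [/eqP -> /eqP ->] _ _.
  by exists 1%N.
move=> hpq hx hy.
rewrite iterSr (proj2 hD) iterDadd.
have [c1 [h1 e1]] : exists c1, ((0 < q)%N -> (0 < c1)%N) /\
    iter n D (x * D y) = (iter p D x * iter q D y) *+ c1.
  case: q hpq hy => [|q] hpq hy.
    exists 0%N; split => //; have -> : D y = 0 by exact: hy.
    by rewrite mulr0 iter0 mulr0n.
  have [c [hc e]] := IH x (D y) p q ltac:(by rewrite addnS in hpq; case: hpq)
    hx ltac:(by rewrite -iterSr).
  by exists c; split => //; rewrite e -iterSr.
have [c2 [h2 e2]] : exists c2, ((0 < p)%N -> (0 < c2)%N) /\
    iter n D (D x * y) = (iter p D x * iter q D y) *+ c2.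
  move: e1 h1; case: p hpq hx => [|p] hpq hx e1 h1.
    exists 0%N; split => //; have -> : D x = 0 by exact: hx.
    by rewrite mul0r iter0 mulr0n.
  have [c [hc e]] := IH (D x) y p q ltac:(by case: hpq)
    ltac:(by rewrite -iterSr) hy.
  by exists c; split => //; rewrite e -iterSr.
exists (c1 + c2)%N; split; last by rewrite e1 e2 mulrnDr.
case: p q hpq h1 h2 {e1 e2 hx hy} => [|p] [|q] //= _.
- by move=> /(_ isT); rewrite addn_gt0 => ->.
- by move=> _ /(_ isT); rewrite addn_gt0 => ->; rewrite orbT.
- by move=> /(_ isT); rewrite addn_gt0 => ->.
Qed.

Lemma lead_kill {n x y p q} : (p + q = n)%N ->
  iter p.+1 D x = 0 -> iter q.+1 D y = 0 -> iter n.+1 D (x * y) = 0.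
Proof.
move=> hpq hx hy; have [c [_ e]] := @lead n x y p q hpq hx hy.
rewrite iterS e DMn (proj2 hD) -iterS hy -iterS hx mulr0 mul0r addr0 mul0rn //.
Qed.

Lemma degex {x} : locally_nilpotent D -> x != 0 ->
  exists m, iter m.+1 D x = 0 /\ iter m D x != 0.
Proof.
move=> hL hx.
have ex : exists k, iter k D x == 0 by have [k hk] := hL x; exists k; apply/eqP.
case: (ex_minnP ex) => k /eqP hk hmin.
case: k hk hmin => [|m] hk hmin; first by move: hx; rewrite -[x]/(iter 0 D x) hk eqxx.
exists m; split => //; apply/negP => /eqP h.
by have := hmin m; rewrite h eqxx ltnn => /(_ isT).
Qed.

Lemma natr_neq0 c : contains_rat A -> (0 < c)%N -> (c%:R : A) != 0.
Proof.
move=> hQ; case: c => // c _; apply/negP => /eqP h.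
by have := hQ c; rewrite h unitr0.
Qed.

End Aux.
Arguments lead {A D} hD {n x y p q}.
Arguments lead_kill {A D} hD {n x y p q}.
Arguments degex {A D} {x}.
Arguments iter_kill {A D} hD k j {x}.
Arguments natr_neq0 {A} c.
Arguments iter0 {A D} hD n.

Theorem corollary3p4 (A : idomainType) (D : A -> A)
  (hQ : contains_rat A) (hD : is_derivation D) (hLND : locally_nilpotent D)
  (a b lam mu : A)
  (ha : a != 0) (hb : b != 0) (hlam : lam != 0) (hmu : mu != 0)
  (hmuker : D mu = 0)
  (heq : lam * a * D b = mu * b * D a) :
  (D a = 0 /\ D b = 0) \/
  (exists r : rat, 0 < r /\ frac_emb lam / frac_emb mu = ratr r).
Proof.
have [m [ma ma0]] := degex hLND ha.
have [n [nb nb0]] := degex hLND hb.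
case: m ma ma0 => [|m] ma ma0.
  have Da0 : D a = 0 by exact: ma.
  left; split => //; move: heq; rewrite Da0 mulr0 => /eqP.
  by rewrite !mulf_eq0 (negbTE hlam) (negbTE ha) => /eqP.
case: n nb nb0 => [|n] nb nb0.
  have Db0 : D b = 0 by exact: nb.
  left; split => //; move: heq; rewrite Db0 mulr0 => /eqP.
  by rewrite eq_sym !mulf_eq0 (negbTE hmu) (negbTE hb) => /eqP.
right.
set P := iter m.+1 D a * iter n.+1 D b.
have P0 : P != 0 by rewrite mulf_neq0.
have hDb : iter n.+1 D (D b) = 0 by rewrite -iterSr.
have hDa : iter m.+1 D (D a) = 0 by rewrite -iterSr.
have [c1 [c1p e1]] := lead hD (erefl (m.+1 + n)%N) ma hDb.
have [c2 [c2p e2]] := lead hD (erefl (n.+1 + m)%N) nb hDa.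
rewrite -iterSr -/P in e1.
rewrite -iterSr [iter n.+1 D b * _]mulrC -/P in e2.
have k1 := lead_kill hD (erefl (m.+1 + n)%N) ma hDb.
have k2 := lead_kill hD (erefl (n.+1 + m)%N) nb hDa.
have hmuit : forall k z, iter k D (mu * z) = mu * iter k D z.
  elim=> // k IH z; by rewrite iterS IH (proj2 hD) hmuker mul0r addr0.
have [l [ll ll0]] := degex hLND hlam.
have [c [cp e]] := lead hD (erefl (l + (m.+1 + n))%N) ll k1.
rewrite -mulrA -mulrA in heq.
have eR : iter (m.+1 + n) D (mu * (b * D a)) = mu * (P *+ c2).
  by rewrite hmuit addnC -addSnnS e2.
case: l ll ll0 e => [|l] ll ll0 e; last first.
  exfalso.
  have z : iter (l.+1 + (m.+1 + n)) D (b * D a) = 0.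
    have -> : (l.+1 + (m.+1 + n) = l + (n.+1 + m).+1)%N.
      by rewrite !addSn !addnS (addnC n).
    by rewrite iterD k2 (iter0 hD).
  rewrite heq hmuit z mulr0 e1 -(mulr_natr _ c1) -(mulr_natr _ c) in e.
  move: e => /eqP; apply/negP; rewrite eq_sym.
  have h1 : (c1%:R : A) != 0 by exact: natr_neq0.
  have h2 : (c%:R : A) != 0 by exact: natr_neq0.
  by apply: mulf_neq0 => //; apply: mulf_neq0 => //; apply: mulf_neq0.
rewrite add0n heq eR e1 -(mulr_natr _ c1) -(mulr_natr _ c2) -(mulr_natr _ c) in e.
have e' : lam * (c1 * c)%:R = mu * c2%:R.
  apply: (mulfI P0); rewrite mulrCA (mulrCA P mu) e natrM !mulrA.
  by [].
set N := (c1 * c)%N.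
have Np : (0 < N)%N by rewrite muln_gt0 c1p.
set r : rat := c2%:R / N%:R.
exists r; split.
  by rewrite divr_gt0 // ltr0n.
have hNq : (N%:R : rat) != 0 by rewrite pnatr_eq0 -lt0n.
have hr : (numq r)%:~R * N%:R = c2%:R * (denq r)%:~R :> rat.
  by rewrite numqE -mulrA (mulrC _ N%:R) mulrA divfK.
have hz : numq r * N%:Z = c2%:Z * denq r.
  apply/eqP; rewrite -subr_eq0 -intq_eq0 intrB !intrM.
  by rewrite [X in X - _ == 0]hr subrr.
have hF : ((numq r * N%:Z)%:~R : {fraction A}) = (c2%:Z * denq r)%:~R by rewrite hz.
rewrite !intrM in hF.
have [d hd] := denqP r.
have tn : forall k : nat, ((Posz k)%:~R : {fraction A}) = tofrac (k%:R).
  by move=> k; rewrite -pmulrn rmorph_nat.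
have hNF : ((N%:Z)%:~R : {fraction A}) != 0.
  by rewrite tn tofrac_eq0 natr_neq0.
have hdF : ((denq r)%:~R : {fraction A}) != 0.
  by rewrite hd tn tofrac_eq0 natr_neq0.
have hmuF : (tofrac mu : {fraction A}) != 0 by rewrite tofrac_eq0.
have eF : tofrac lam * (N%:Z)%:~R = tofrac mu * (c2%:Z)%:~R :> {fraction A}.
  by rewrite !tn -!tofracM e'.
rewrite /frac_emb /ratr; apply/eqP; rewrite eqr_div //; apply/eqP.
apply: (mulIf hNF).
rewrite mulrAC eF -!mulrA [RHS]mulrCA hF //.
Qed.
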